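(* Let $p$ be an odd prime, $i$ an integer with $1\leq i\leq p-1$, and $k\geq1$ an integer. Then for every integer $l\geq k$, $v_p\left(\frac{k!}{l!}{l \brace k}_{\leq i}\right)\geq 0$.
   Context: For integers $N\geq k\geq0$ and $r\ge1$, the $r$-restricted Stirling number of the second kind ${N \brace k}_{\leq r}$ is $\sum \frac{N!}{\prod_{m=1}^r j_m!(m!)^{j_m}}$ over $(j_1,\dots,j_r)\in\mathbb{N}^r$ with $\sum j_m=k$, $\sum m j_m=N$; equivalently the number of partitions of an $N$-element set into $k$ nonempty blocks of size at most $r$. $v_p$ is the $p$-adic valuation on $\mathbb{Q}$ (with $v_p(0)=+\infty$). *)

(* Defs.v *)
From mathcomp Require Import all_boot all_order all_algebra.
Set Implicit Arguments. Unset Strict Implicit. Unset Printing Implicit Defensive.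
Import Order.TTheory GRing.Theory Num.Theory.

(* r-restricted Stirling number of the second kind {N brace k}_{<= r}:
   the number of partitions of an N-element set (here 'I_N) into k nonempty
   blocks, each of size at most r. (finset's [partition P D] already requires
   blocks to be nonempty.) *)
Definition rstirling2 (N k r : nat) : nat :=
  #|[set P : {set {set 'I_N}} |
      [&& partition P [set: 'I_N], #|P| == k & [forall B in P, #|B| <= r]]]|.

(* p-adic valuation on rat, with v_p(0) = +oo encoded as None. *)
Definition vp (p : nat) (q : rat) : option int :=
  if q == 0%R then None
  else Some ((logn p (absz (numq q)))%:Z - (logn p (absz (denq q)))%:Z)%R.

Definition vp_ge0 (p : nat) (q : rat) : bool :=
  if vp p q is Some v then (0 <= v)%R else true.

(* Main.v *)
Require Import Defs.
From mathcomp Require Import all_boot all_order all_algebra.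
From mathcomp Require Import all_fingroup all_solvable.
Import Order.TTheory GRing.Theory Num.Theory.

Lemma vp_frac (p a b : nat) : prime p -> 0 < b -> ~~ (p %| b) ->
  vp_ge0 p ((a%:R / b%:R) : rat).
Proof.
move=> pp b0 npb; rewrite /vp_ge0 /vp; case: ifP => // _.
set q : rat := (a%:R / b%:R)%R.
have E : (numq q * b%:Z = a%:Z * denq q)%R.
  apply: (@intr_inj rat); rewrite !intrM numqE /q.
  have bn : ((b%:Z)%:~R : rat) != 0%R by rewrite intr_eq0 eqz_nat -lt0n.
  by rewrite !pmulrn mulrAC divfK.
have Ea := f_equal absz E; rewrite !abszM /= in Ea.
have dvd : `|denq q|%N %| b.
  rewrite -(@Gauss_dvdr _ `|numq q|%N); last by rewrite coprime_sym coprime_num_den.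
  by rewrite Ea dvdn_mull.
have L : logn p `|denq q|%N = 0.
  apply/eqP; rewrite -leqn0.
  have -> : 0 = logn p b by rewrite lognE (negPf npb) !andbF.
  by apply: dvdn_leq_log.
by rewrite L subr0.
Qed.
Section Comb.
Variables l k r : nat.
Definition fib (f : {ffun 'I_l -> 'I_k}) (j : 'I_k) : {set 'I_l} := [set x | f x == j].
Definition phi (f : {ffun 'I_l -> 'I_k}) : {set {set 'I_l}} := [set fib f j | j : 'I_k].
Definition Part := [set P : {set {set 'I_l}} |
      [&& partition P [set: 'I_l], #|P| == k & [forall B in P, #|B| <= r]]].
Definition Fset := [set f : {ffun 'I_l -> 'I_k} |
   [forall j, (0 < #|fib f j|) && (#|fib f j| <= r)]].

Lemma fib_eq f1 f2 : (forall j, fib f1 j = fib f2 j) -> f1 = f2.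
Proof.
move=> H; apply/ffunP => x.
have : x \in fib f1 (f1 x) by rewrite inE.
by rewrite H inE => /eqP.
Qed.

Lemma Fset_phi f : (f \in Fset) = (phi f \in Part).
Proof.
apply/idP/idP.
- rewrite inE => /forallP H.
  have finj : injective (fib f).
    move=> j1 j2 E; have /andP[H1 _] := H j1.
    rewrite card_gt0 in H1; case/set0Pn: H1 => x Hx.
    move: (Hx); rewrite E !inE => /eqP e2; move: Hx.
    by rewrite !inE e2 => /eqP.
  rewrite inE; apply/and3P; split.
  + apply/and3P; split.
    * apply/eqP/setP => x; rewrite inE; apply/bigcupP.
      by exists (fib f (f x)); [apply: imset_f | rewrite inE].
    * apply/trivIsetP => A B /imsetP[j1 _ ->] /imsetP[j2 _ ->] nE.
      rewrite -setI_eq0; apply/set0Pn => -[x]; rewrite !inE.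
      by case/andP => /eqP e1 /eqP e2; rewrite -e1 -e2 eqxx in nE.
    * apply/imsetP => -[j _ E]; have /andP[H1 _] := H j.
      by rewrite -E cards0 in H1.
  + by rewrite card_imset // card_ord.
  + apply/forallP => B; apply/implyP => /imsetP[j _ ->].
    by have /andP[_ ->] := H j.
- rewrite !inE => /and3P[/and3P[_ _ n0] _ /forallP H].
  apply/forallP => j.
  have Hm : fib f j \in phi f by apply: imset_f.
  rewrite card_gt0 (implyP (H _) Hm) andbT.
  by apply: contraNneq n0 => <-.
Qed.


Lemma Fset_fib_inj f : f \in Fset -> injective (fib f).
Proof.
rewrite inE => /forallP H j1 j2 E; have /andP[H1 _] := H j1.
rewrite card_gt0 in H1; case/set0Pn: H1 => x Hx.
move: (Hx); rewrite E !inE => /eqP e2; move: Hx.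
by rewrite !inE e2 => /eqP.
Qed.

Lemma phi_perm (t : {perm 'I_k}) (f : {ffun 'I_l -> 'I_k}) : phi [ffun x => t (f x)] = phi f.
Proof.
have E j : fib [ffun x => t (f x)] j = fib f ((t^-1)%g j).
  apply/setP => x; rewrite !inE ffunE; apply/eqP/eqP => [<-|->].
    by rewrite permK.
  by rewrite permKV.
apply/setP => B; apply/imsetP/imsetP => -[j _ ->].
  by exists ((t^-1)%g j) => //; rewrite E.
by exists (t j) => //; rewrite E permK.
Qed.

Lemma phi_surj f : phi f \in Part -> forall j, exists x, f x = j.
Proof.
rewrite -Fset_phi inE => /forallP H j; have /andP[H1 _] := H j.
rewrite card_gt0 in H1; case/set0Pn: H1 => x; rewrite inE => /eqP; eauto.
Qed.

Lemma card_fiber P : 0 < k -> P \in Part -> #|[set f | phi f == P]| = k`!.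
Proof.
move=> k0 HP; have HP' := HP; rewrite inE in HP'.
case/and3P: HP' => /and3P[/eqP Pcov Ptriv P0] /eqP Pk _.
have /set0Pn[B0 HB0] : P != set0 by rewrite -card_gt0 Pk.
pose er := fun B => cast_ord Pk (enum_rank_in HB0 B).
have erK : {in P &, injective er}.
  move=> B1 B2 H1 H2 /cast_ord_inj E.
  by rewrite -(enum_rankK_in HB0 H1) E enum_rankK_in.
pose f0 := [ffun x => er (pblock P x)].
have cov x : x \in cover P by rewrite Pcov inE.
have fibf0 B : B \in P -> fib f0 (er B) = B.
  move=> HB; apply/setP => x; rewrite !inE ffunE; apply/eqP/idP.
    move/(erK _ _ (pblock_mem (cov x)) HB) => <-.
    by rewrite mem_pblock cov.
  by move=> Hx; rewrite (def_pblock Ptriv HB Hx).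
have phif0 : phi f0 = P.
  apply/setP => B; apply/imsetP/idP.
    case=> j _ ->; set B' := enum_val (cast_ord (esym Pk) j).
    have HB' : B' \in P := enum_valP _.
    have <- : er B' = j by rewrite /er /B' enum_valK_in cast_ordKV.
    by rewrite fibf0.
  by move=> HB; exists (er B) => //; rewrite fibf0.
apply/eqP; rewrite eqn_leq; apply/andP; split.
- pose g := fun f : {ffun 'I_l -> 'I_k} => [ffun j => er (fib f j)].
  have ginj : {in [set f | phi f == P] &, injective g}.
    move=> f1 f2; rewrite !inE => /eqP H1 /eqP H2 E; apply: fib_eq => j.
    have := congr1 (fun h : {ffun 'I_k -> 'I_k} => h j) E; rewrite /g !ffunE; apply: erK.
      by rewrite -H1; apply: imset_f.
    by rewrite -H2; apply: imset_f.
  rewrite -(card_in_imset ginj).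
  have -> : k`! = #|[set h : {ffun 'I_k -> 'I_k} | injectiveb h]|.
    by rewrite card_inj_ffuns card_ord ffactnn.
  apply: subset_leq_card; apply/subsetP => h /imsetP[f]; rewrite inE => /eqP Hf ->.
  have mf j : fib f j \in P by rewrite -Hf; apply: imset_f.
  rewrite inE; apply/injectiveP => j1 j2; rewrite !ffunE.
  move=> /(erK _ _ (mf j1) (mf j2)); apply: Fset_fib_inj.
  by rewrite Fset_phi Hf.
- have -> : k`! = #|[set [ffun x => t (f0 x)] | t : {perm 'I_k}]|.
    rewrite card_imset ?card_Sn //.
    move=> t1 t2 E; apply/permP => j.
    have [x <-] := @phi_surj f0 (ltac:(by rewrite phif0)) j.
    by have := congr1 (fun h : {ffun 'I_l -> 'I_k} => h x) E; rewrite !ffunE.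
  apply: subset_leq_card; apply/subsetP => h /imsetP[t _ ->].
  by rewrite inE phi_perm phif0.
Qed.

Lemma card_Fset : 0 < k -> #|Fset| = k`! * #|Part|.
Proof.
move=> k0.
rewrite -sum1_card (eq_bigl (fun f => phi f \in Part)); last by move=> f; rewrite Fset_phi.
rewrite (partition_big phi (mem Part)) //=.
rewrite mulnC -sum1_card big_distrl /=; apply: eq_bigr => P HP.
rewrite mul1n -(card_fiber P k0 HP) -sum1_card; apply: eq_bigl => f.
by rewrite inE; case: eqP => [->|]; rewrite ?HP ?andbF.
Qed.

End Comb.
Section Act.
Variables l k r p : nat.
Definition fto (f : {ffun 'I_l -> 'I_k}) (s : {perm 'I_l}) : {ffun 'I_l -> 'I_k} :=
  [ffun x => f ((s^-1)%g x)].
Lemma fto1 : fto^~ 1%g =1 id.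
Proof. by move=> f; apply/ffunP => x; rewrite ffunE invg1 perm1. Qed.
Lemma ftoM f : act_morph fto f.
Proof. by move=> s t; apply/ffunP => x; rewrite !ffunE invMg permM. Qed.
Definition fact := TotalAction fto1 ftoM.

Lemma acts_F : [acts [set: {perm 'I_l}], on Fset l k r | fact].
Proof.
apply/subsetP => s _; apply/astabsP => f.
have E j : #|fib l k (fto f s) j| = #|fib l k f j|.
  rewrite -(card_preimset (fib l k f j) (@perm_inj _ (s^-1)%g)).
  by apply: eq_card => x; rewrite !inE ffunE.
by rewrite /= !inE; apply: eq_forallb => j; rewrite E.
Qed.

Lemma stab_coprime f : prime p -> r < p -> f \in Fset l k r ->
  ~~ (p %| #|('C_[set: {perm 'I_l}][f | fact])%g|).
Proof.
move=> pp rp Hf; apply/negP => /(Cauchy pp) [s Hs ops].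
have Hst a : a \in <[s]>%g -> fto f a = f.
  rewrite -cycle_subG in Hs => Ha; have := subsetP Hs a Ha.
  by case/setIP => _ /astab1P.
have fx x y : y \in orbit 'P <[s]>%g x -> f y = f x.
  case/orbitP => a Ha <-; have := congr1 (fun h : {ffun 'I_l -> 'I_k} => h (a x)) (Hst a Ha).
  by rewrite ffunE /= permK => ->.
have s1 x : s x = x.
  have sub : orbit 'P <[s]>%g x \subset fib l k f (f x).
    by apply/subsetP => y /fx; rewrite inE => ->.
  have le : #|orbit 'P <[s]>%g x| <= r.
    apply: leq_trans (subset_leq_card sub) _.
    by move: Hf; rewrite inE => /forallP /(_ (f x)) /andP[].
  have dv : #|orbit 'P <[s]>%g x| %| p by rewrite -ops; apply: dvdn_orbit.
  have /primeP[_ /(_ _ dv) /orP[|/eqP E]] := pp; last first.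
    by rewrite E in le; rewrite ltnNge le in rp.
  case/cards1P => y Ey.
  have h1 := orbit_refl 'P <[s]>%g x.
  have h2 := mem_orbit 'P x (cycle_id s).
  rewrite Ey !inE in h1 h2.
  by move: h2; rewrite /= apermE (eqP h1) => /eqP.
have : s = 1%g by apply/permP => x; rewrite perm1 s1.
by move=> s1'; rewrite s1' order1 in ops; rewrite -ops in pp.
Qed.

Lemma pe_dvd : prime p -> r < p -> p ^ logn p l`! %| #|Fset l k r|.
Proof.
move=> pp rp.
rewrite -(acts_sum_card_orbit acts_F); apply: dvdn_sum => X /imsetP[f Hf ->].
have := card_orbit_stab fact [set: {perm 'I_l}]%G f; rewrite cardsT card_Sn => E.
rewrite -(@Gauss_dvdl _ _ #|('C_[set: {perm 'I_l}][f | fact])%g|) ?E ?pfactor_dvdnn //.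
by apply: coprimeXl; rewrite prime_coprime // stab_coprime.
Qed.
End Act.

Theorem lemma3p13 (p i k : nat) :
  prime p -> odd p -> 1 <= i <= p.-1 -> 1 <= k ->
  forall l : nat, k <= l ->
  vp_ge0 p ((k`!)%:R / (l`!)%:R * (rstirling2 l k i)%:R : rat).
Proof.
move=> pp _ /andP[_ ip] k1 l _.
have rp : i < p by apply: leq_ltn_trans ip _; rewrite prednK ?prime_gt0.
have Hd := pe_dvd l k i p pp rp; rewrite card_Fset // in Hd.
have HS : #|Part l k i| = rstirling2 l k i by [].
rewrite HS in Hd.
set e := logn p l`! in Hd.
case/dvdnP: Hd => a Ea.
case/dvdnP: (pfactor_dvdnn p l`!) => b Eb.
rewrite -/e in Eb.
have pe0 : 0 < p ^ e by rewrite expn_gt0 prime_gt0.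
have b0 : 0 < b.
  by move: (fact_gt0 l); rewrite Eb muln_gt0 => /andP[].
have nb : ~~ (p %| b).
  have : logn p l`! = logn p b + e by rewrite {1}Eb lognM // pfactorK.
  move=> E; have L : logn p b = 0.
    by apply/eqP; rewrite -(eqn_add2r e) add0n -E /e.
  by move: L; rewrite lognE pp b0 /=; case: (p %| b).
have -> : ((k`!)%:R / (l`!)%:R * (rstirling2 l k i)%:R : rat) = (a%:R / b%:R)%R.
  rewrite mulrAC -natrM Ea Eb !natrM.
  have c0 : ((p ^ e)%:R : rat) != 0%R by rewrite pnatr_eq0 -lt0n.
  by rewrite invfM mulrACA divff // mulr1.
exact: vp_frac.
Qed.
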